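(* Let $\epsilon\in\{+1,-1\}$ and $s\ge0$, and let $G_3^{s,\epsilon}=(P_1,P_2,P_3)/Q$ with $P_1=256\epsilon z+96izw+64\epsilon s w^2+64z^3+64i\epsilon s z^2w-3(3\epsilon-16s^2)zw^2+4isw^3$, $P_2=256\epsilon z^2-16w^2+256sz^3+16iz^2w-16\epsilon s zw^2-i\epsilon w^3$, $P_3=w\bigl(256\epsilon-32iw+64z^2-64i\epsilon s zw-(\epsilon+16s^2)w^2\bigr)$, $Q=256\epsilon-32iw+64z^2-192i\epsilon s zw-(17\epsilon+144s^2)w^2+32i\epsilon z^2w+24szw^2+iw^3$. Then $G_3^{s,\epsilon}$ is of degree $2$ if and only if $\epsilon=-1$ and $s=\frac12$.
   Context: For a rational holomorphic map $H=(P_1,\dots,P_{N'})/Q$ with polynomials $P_k,Q$, $H$ is reduced if $P_1,\dots,P_{N'},Q$ have no common factor, and the degree of a reduced rational map is $\max(\deg P_1,\dots,\deg P_{N'},\deg Q)$; the degree of a rational map is that of its reduced representation. *)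

(* Defs.v *)
From HB Require Import structures.
From mathcomp Require Import all_boot all_order all_algebra.
From mathcomp Require Import complex.
From mathcomp Require Import mpoly.
Set Implicit Arguments. Unset Strict Implicit. Unset Printing Implicit Defensive.
Import Order.TTheory GRing.Theory Num.Theory.
Local Open Scope ring_scope.

(* total degree of a polynomial (msize p = 1 + total degree, 0 for p = 0) *)
Definition mtdeg (n : nat) (F : idomainType) (p : {mpoly F[n]}) : nat :=
  (msize p).-1.

Definition common_factor (n N : nat) (F : idomainType)
    (P : 'I_N -> {mpoly F[n]}) (Q : {mpoly F[n]}) : Prop :=
  exists D : {mpoly F[n]}, (1 < msize D)%N /\
    (exists A : {mpoly F[n]}, Q = D * A) /\
    (forall k, exists A : {mpoly F[n]}, P k = D * A).

Definition reduced (n N : nat) (F : idomainType)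
    (P : 'I_N -> {mpoly F[n]}) (Q : {mpoly F[n]}) : Prop :=
  ~ common_factor P Q.

Definition rep_degree (n N : nat) (F : idomainType)
    (P : 'I_N -> {mpoly F[n]}) (Q : {mpoly F[n]}) : nat :=
  maxn (\max_(k < N) mtdeg (P k)) (mtdeg Q).

(* The rational map P/Q (Q <> 0) has degree d: d is the degree of its reduced
   representation, i.e. of a reduced P'/Q' defining the same rational map. *)
Definition rat_map_degree_is (n N : nat) (F : idomainType)
    (P : 'I_N -> {mpoly F[n]}) (Q : {mpoly F[n]}) (d : nat) : Prop :=
  Q != 0 /\
  exists (P' : 'I_N -> {mpoly F[n]}) (Q' : {mpoly F[n]}),
    [/\ Q' != 0, reduced P' Q', (forall k, P k * Q' = P' k * Q)
      & rep_degree P' Q' = d].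

Section G3.
Variable R : rcfType.
Local Notation C := R[i].
Local Notation MP := {mpoly C[2]}.

Definition cR (x : R) : MP := (Complex x 0 : C)%:MP.
Definition iM : MP := (Complex 0 1 : C)%:MP.
Definition zM : MP := 'X_(@Ordinal 2 0 isT).
Definition wM : MP := 'X_(@Ordinal 2 1 isT).

Variables (e s : R).
Local Notation z := zM.
Local Notation w := wM.
Local Notation I := iM.
Local Notation E := (cR e).
Local Notation S := (cR s).

Definition G3_P1 : MP :=
  256 * E * z + 96 * I * z * w + 64 * E * S * w ^+ 2 + 64 * z ^+ 3
  + 64 * I * E * S * z ^+ 2 * w - 3 * (3 * E - 16 * S ^+ 2) * z * w ^+ 2
  + 4 * I * S * w ^+ 3.

Definition G3_P2 : MP :=
  256 * E * z ^+ 2 - 16 * w ^+ 2 + 256 * S * z ^+ 3 + 16 * I * z ^+ 2 * w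
  - 16 * E * S * z * w ^+ 2 - I * E * w ^+ 3.

Definition G3_P3 : MP :=
  w * (256 * E - 32 * I * w + 64 * z ^+ 2 - 64 * I * E * S * z * w
       - (E + 16 * S ^+ 2) * w ^+ 2).

Definition G3_Q : MP :=
  256 * E - 32 * I * w + 64 * z ^+ 2 - 192 * I * E * S * z * w
  - (17 * E + 144 * S ^+ 2) * w ^+ 2 + 32 * I * E * z ^+ 2 * w
  + 24 * S * z * w ^+ 2 + I * w ^+ 3.

Definition G3_P (k : 'I_3) : MP :=
  match val k with 0 => G3_P1 | 1 => G3_P2 | _ => G3_P3 end.
End G3.

(* Main.v *)
Require Import Defs.
From HB Require Import structures.
From mathcomp Require Import all_boot all_order all_algebra.
From mathcomp Require Import complex.
From mathcomp Require Import mpoly.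
From mathcomp Require Import ring.
Import Order.TTheory GRing.Theory Num.Theory.
Local Open Scope complex_scope.
Local Open Scope ring_scope.
Set Implicit Arguments. Unset Strict Implicit. Unset Printing Implicit Defensive.

Definition v2 {R : rcfType} (a b : R[i]) : 'I_2 -> R[i] := fun j => if val j == 0%N then a else b.
Lemma ev_z {R : rcfType} (a b : R[i]) : (zM R).@[v2 a b] = a. Proof. by rewrite /zM mevalXU. Qed.
Lemma ev_w {R : rcfType} (a b : R[i]) : (wM R).@[v2 a b] = b. Proof. by rewrite /wM mevalXU. Qed.
Lemma ev_c {R : rcfType} (a b : R[i]) x : (cR x).@[v2 a b] = x%:C. Proof. by rewrite /cR mevalC. Qed.
Lemma ev_i {R : rcfType} (a b : R[i]) : (iM R).@[v2 a b] = 'i%C. Proof. by rewrite /iM mevalC. Qed.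
Section EvL.
Variable R : rcfType.
Implicit Types (a b : R[i]) (p q : {mpoly R[i][2]}).
Lemma evD a b p q : (p + q).@[v2 a b] = p.@[v2 a b] + q.@[v2 a b]. Proof. exact: mevalD. Qed.
Lemma evB a b p q : (p - q).@[v2 a b] = p.@[v2 a b] - q.@[v2 a b]. Proof. exact: mevalB. Qed.
Lemma evN a b p : (- p).@[v2 a b] = - p.@[v2 a b]. Proof. exact: mevalN. Qed.
Lemma evM a b p q : (p * q).@[v2 a b] = p.@[v2 a b] * q.@[v2 a b]. Proof. exact: mevalM. Qed.
Lemma evX a b p n : (p ^+ n).@[v2 a b] = p.@[v2 a b] ^+ n. Proof. exact: rmorphXn. Qed.
Lemma evn a b n : (n%:R : {mpoly R[i][2]}).@[v2 a b] = n%:R. Proof. exact: rmorph_nat. Qed.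
Lemma ev1 a b : (1 : {mpoly R[i][2]}).@[v2 a b] = 1. Proof. exact: rmorph1. Qed.
Lemma ev0 a b : (0 : {mpoly R[i][2]}).@[v2 a b] = 0. Proof. exact: rmorph0. Qed.
Lemma evC a b c : (c%:MP : {mpoly R[i][2]}).@[v2 a b] = c. Proof. exact: mevalC. Qed.
End EvL.
Ltac evsimp := rewrite ?(evD, evB, evN, evM, evX, evn, ev1, ev0, ev_z, ev_w, ev_c, ev_i, evC).

Definition o0 : 'I_2 := @Ordinal 2 0 isT.
Definition o1 : 'I_2 := @Ordinal 2 1 isT.
Definition mab (a b : nat) : 'X_{1..2} := (U_(o0) *+ a + U_(o1) *+ b)%MM.

Lemma mabE a b (j : 'I_2) : mab a b j = if val j == 0%N then a else b.
Proof.
rewrite /mab mnmDE !mulmnE !mnm1E.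
case: j => [[|[|j]] hj] //=; rewrite ?muln1 ?mul1n ?muln0 ?mul0n ?addn0 //.
Qed.

Lemma eq_mab a b c d : (mab a b == mab c d) = (a == c) && (b == d).
Proof.
apply/eqP/andP => [h|[/eqP -> /eqP ->]] //.
have h0 := congr1 (fun m : 'X_{1..2} => m o0) h.
have h1 := congr1 (fun m : 'X_{1..2} => m o1) h.
by rewrite /= !mabE /= in h0 h1; rewrite h0 h1.
Qed.

Lemma mab_k (k : 'X_{1..2}) : k = mab (k o0) (k o1).
Proof.
apply/mnmP => j; rewrite mabE.
by case: j => [[|[|j]] hj] //=; congr (k _); apply: val_inj.
Qed.

Lemma mdeg_mab a b : mdeg (mab a b) = (a + b)%N.
Proof. by rewrite /mab mdegD !mdegMn !mdeg1 !mul1n. Qed.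

Section Exp.
Variable R : rcfType.
Local Notation C := R[i].
Local Notation MP := {mpoly C[2]}.
Local Notation z := (zM R).
Local Notation w := (wM R).

Lemma Xab a b : 'X_[mab a b] = z ^+ a * w ^+ b :> MP.
Proof. by rewrite /mab mpolyXD -!mpolyXn. Qed.

Definition F6 (c00 c10 c01 c20 c11 c02 : C) : MP :=
  c00%:MP + c10%:MP * z + c01%:MP * w + c20%:MP * z ^+ 2 + c11%:MP * (z * w) + c02%:MP * w ^+ 2.

Lemma F6X c00 c10 c01 c20 c11 c02 : F6 c00 c10 c01 c20 c11 c02 =
  c00 *: 'X_[mab 0 0] + c10 *: 'X_[mab 1 0] + c01 *: 'X_[mab 0 1] +
  c20 *: 'X_[mab 2 0] + c11 *: 'X_[mab 1 1] + c02 *: 'X_[mab 0 2].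
Proof. by rewrite !Xab /F6 -!mul_mpolyC !expr0 !expr1 !mulr1 !mul1r. Qed.

Lemma mulr_b (c : C) (b : bool) : c * b%:R = if b then c else 0.
Proof. by case: b; rewrite ?mulr1 ?mulr0. Qed.

Lemma mcoeffF6 c00 c10 c01 c20 c11 c02 a b :
  (F6 c00 c10 c01 c20 c11 c02)@_(mab a b) =
  (if (0 == a) && (0 == b) then c00 else 0) + (if (1 == a) && (0 == b) then c10 else 0) +
  (if (0 == a) && (1 == b) then c01 else 0) + (if (2 == a) && (0 == b) then c20 else 0) +
  (if (1 == a) && (1 == b) then c11 else 0) + (if (0 == a) && (2 == b) then c02 else 0).
Proof. by rewrite F6X !mcoeffD !mcoeffZ !mcoeffX !eq_mab !mulr_b. Qed.

Lemma E2 (p : MP) : (msize p <= 3)%N ->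
  p = F6 p@_(mab 0 0) p@_(mab 1 0) p@_(mab 0 1) p@_(mab 2 0) p@_(mab 1 1) p@_(mab 0 2).
Proof.
move=> hp; apply/mpolyP => k; rewrite (mab_k k) mcoeffF6.
move: (k o0) (k o1) => a b.
have hz : (2 < a + b)%N -> p@_(mab a b) = 0.
  move=> hab; apply: memN_msupp_eq0; apply: msize_mdeg_ge.
  by rewrite mdeg_mab; apply: leq_trans hp hab.
case: a hz => [|[|[|a]]] hz; case: b hz => [|[|[|b]]] hz;
  rewrite /= ?addr0 ?add0r;
  match goal with |- ?x = ?x => reflexivity | _ => rewrite hz; [reflexivity | rewrite ?addnS ?addSn; exact: isT] end.
Qed.

Lemma E2ex (p : MP) : (msize p <= 3)%N ->
  exists c00 c10 c01 c20 c11 c02, p = F6 c00 c10 c01 c20 c11 c02.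
Proof. by move=> /E2 hp; do 6 eexists; exact: hp. Qed.

Lemma E1ex (p : MP) : (msize p <= 2)%N ->
  exists c00 c10 c01, p = F6 c00 c10 c01 0 0 0.
Proof.
move=> hp; have hp3 : (msize p <= 3)%N by apply: leq_trans hp _.
have hz a b : (2 <= a + b)%N -> p@_(mab a b) = 0.
  move=> hab; apply: memN_msupp_eq0; apply: msize_mdeg_ge.
  by rewrite mdeg_mab; apply: leq_trans hp hab.
by exists p@_(mab 0 0), p@_(mab 1 0), p@_(mab 0 1); rewrite {1}(E2 hp3) (hz 2 0) // (hz 1 1) // (hz 0 2).
Qed.

Lemma F6size c00 c10 c01 c20 c11 c02 : (msize (F6 c00 c10 c01 c20 c11 c02) <= 3)%N.
Proof.
rewrite F6X.
have hX a b : (a + b <= 2)%N -> forall c : C, (msize (c *: 'X_[mab a b] : MP) <= 3)%N.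
  by move=> hab c; apply: leq_trans (msizeZ_le _ _) _; rewrite msizeX mdeg_mab ltnS.
have hD (p q : MP) : (msize p <= 3)%N -> (msize q <= 3)%N -> (msize (p + q) <= 3)%N.
  by move=> hp hq; apply: leq_trans (msizeD_le _ _) _; rewrite geq_max hp hq.
apply: (hD _ _); last by apply: (hX _ _).
apply: (hD _ _); last by apply: (hX _ _).
apply: (hD _ _); last by apply: (hX _ _).
apply: (hD _ _); last by apply: (hX _ _).
apply: (hD _ _); last by apply: (hX _ _).

by apply: (hX _ _).
Qed.
End Exp.

Section Evals.
Variable R : rcfType.
Local Notation C := R[i].
Variables (e s : R) (a b : C).
Local Notation E := (e%:C : C).
Local Notation S := (s%:C : C).
Local Notation I := ('i%C : C).

Lemma evF6 c00 c10 c01 c20 c11 c02 : (F6 c00 c10 c01 c20 c11 c02).@[v2 a b] =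
  c00 + c10 * a + c01 * b + c20 * a ^+ 2 + c11 * (a * b) + c02 * b ^+ 2.
Proof. by rewrite /F6; evsimp. Qed.

Lemma evP1 : (G3_P1 e s).@[v2 a b] =
  256 * E * a + 96 * I * a * b + 64 * E * S * b ^+ 2 + 64 * a ^+ 3
  + 64 * I * E * S * a ^+ 2 * b - 3 * (3 * E - 16 * S ^+ 2) * a * b ^+ 2
  + 4 * I * S * b ^+ 3.
Proof. by rewrite /G3_P1; evsimp. Qed.

Lemma evP2 : (G3_P2 e s).@[v2 a b] =
  256 * E * a ^+ 2 - 16 * b ^+ 2 + 256 * S * a ^+ 3 + 16 * I * a ^+ 2 * b
  - 16 * E * S * a * b ^+ 2 - I * E * b ^+ 3.
Proof. by rewrite /G3_P2; evsimp. Qed.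

Lemma evP3 : (G3_P3 e s).@[v2 a b] =
  b * (256 * E - 32 * I * b + 64 * a ^+ 2 - 64 * I * E * S * a * b
       - (E + 16 * S ^+ 2) * b ^+ 2).
Proof. by rewrite /G3_P3; evsimp. Qed.

Lemma evQ : (G3_Q e s).@[v2 a b] =
  256 * E - 32 * I * b + 64 * a ^+ 2 - 192 * I * E * S * a * b
  - (17 * E + 144 * S ^+ 2) * b ^+ 2 + 32 * I * E * a ^+ 2 * b
  + 24 * S * a * b ^+ 2 + I * b ^+ 3.
Proof. by rewrite /G3_Q; evsimp. Qed.
End Evals.

Lemma lin1 {F : comRingType} (y1 l1 r1 c x : F) :
  l1 = r1 -> y1 * (l1 - r1) = c * x -> c * x = 0.
Proof. by move=> -> <-; rewrite subrr mulr0. Qed.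
Lemma lin2 {F : comRingType} (y1 y2 l1 r1 l2 r2 c x : F) :
  l1 = r1 -> l2 = r2 -> y1 * (l1 - r1) + y2 * (l2 - r2) = c * x -> c * x = 0.
Proof. by move=> -> -> <-; rewrite !subrr !mulr0 addr0. Qed.
Lemma lin3 {F : comRingType} (y1 y2 y3 l1 r1 l2 r2 l3 r3 c x : F) :
  l1 = r1 -> l2 = r2 -> l3 = r3 ->
  y1 * (l1 - r1) + y2 * (l2 - r2) + y3 * (l3 - r3) = c * x -> c * x = 0.
Proof. by move=> -> -> -> <-; rewrite !subrr !mulr0 !addr0. Qed.
Lemma lin6 {F : comRingType} (y1 y2 y3 y4 y5 y6 l1 r1 l2 r2 l3 r3 l4 r4 l5 r5 l6 r6 c x : F) :
  l1 = r1 -> l2 = r2 -> l3 = r3 -> l4 = r4 -> l5 = r5 -> l6 = r6 ->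
  y1 * (l1 - r1) + y2 * (l2 - r2) + y3 * (l3 - r3) + y4 * (l4 - r4) + y5 * (l5 - r5)
  + y6 * (l6 - r6) = c * x -> c * x = 0.
Proof. by move=> -> -> -> -> -> -> <-; rewrite !subrr !mulr0 !addr0. Qed.
Arguments lin1 {F} y1 {l1 r1 c x}.
Arguments lin2 {F} y1 y2 {l1 r1 l2 r2 c x}.
Arguments lin3 {F} y1 y2 y3 {l1 r1 l2 r2 l3 r3 c x}.
Arguments lin6 {F} y1 y2 y3 y4 y5 y6 {l1 r1 l2 r2 l3 r3 l4 r4 l5 r5 l6 r6 c x}.

Section Help.
Variable R : rcfType.
Local Notation C := R[i].
Local Notation MP := {mpoly C[2]}.

Lemma c_one : (1 : R)%:C = 1 :> C. Proof. exact: rmorph1. Qed.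
Lemma c_mone : (-1 : R)%:C = -1 :> C. Proof. exact: rmorphN1. Qed.
Lemma nzC (x : R) : x != 0 -> x%:C != 0 :> C.
Proof. by apply: contra => /eqP h; apply/eqP; apply: (@complexI R); rewrite h. Qed.
Lemma i_neq0 : 'i%C != 0 :> C.
Proof.
apply/eqP => h; have := sqr_i R; rewrite h expr0n /= => /eqP.
by rewrite eq_sym oppr_eq0 oner_eq0.
Qed.
Lemma posF (a b : nat) (s : R) : (0 < a)%N -> (a%:R + b%:R * s%:C ^+ 2 : C) != 0.
Proof.
move=> ha.
rewrite (_ : (a%:R + b%:R * s%:C ^+ 2 : C) = (a%:R + b%:R * s ^+ 2)%:C); last first.
  by rewrite rmorphD rmorphM rmorphXn !rmorph_nat.
apply: nzC; apply: lt0r_neq0; apply: ltr_wpDr.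
  by rewrite mulr_ge0 ?sqr_ge0 ?ler0n.
by rewrite ltr0n.
Qed.
Lemma cancel0 (K F x : C) : K * F * x = 0 -> F != 0 -> K != 0 -> x = 0.
Proof. by move=> /eqP; rewrite !mulf_eq0 => /orP[/orP[]|/eqP //] /eqP -> ; rewrite eqxx. Qed.
Lemma F6_11 (c : C) : F6 0 0 0 0 c 0 = c%:MP * (zM R * wM R).
Proof. by rewrite /F6 !mpolyC0 !mul0r !add0r addr0. Qed.
Lemma F6_0 : F6 0 0 0 0 0 0 = 0 :> MP.
Proof. by rewrite /F6 !mpolyC0 !mul0r !add0r. Qed.
Lemma X_neq0 (j : 'I_2) : ('X_j : MP) != 0.
Proof. by rewrite -msize_poly_eq0 msizeX mdeg1. Qed.
Lemma zw_neq0 : zM R * wM R != 0.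
Proof. by rewrite mulf_neq0 // X_neq0. Qed.
End Help.
Ltac Knz := repeat (first [ apply: mulf_neq0 | apply: expf_neq0 | apply: i_neq0 | apply: oner_neq0 | rewrite oppr_eq0 | rewrite pnatr_eq0 ]); done.
Definition k0 : 'I_3 := @Ordinal 3 0 isT.
Definition k1 : 'I_3 := @Ordinal 3 1 isT.
Definition k2 : 'I_3 := @Ordinal 3 2 isT.

Section Fwd.
Variable R : rcfType.
Local Notation C := R[i].
Local Notation MP := {mpoly C[2]}.
Lemma fwd_p (s : R) (hnz : (1 : R) + 4 * s ^+ 2 != 0) (Q' : MP) (P' : 'I_3 -> MP)
  (H : forall k, G3_P (1 : R) s k * Q' = P' k * G3_Q (1 : R) s)
  (hQ : (msize Q' <= 3)%N) (hP : forall k, (msize (P' k) <= 3)%N) : Q' = 0.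
Proof.
have hi : 'i%C ^+ 2 = -1 :> C := sqr_i R.
have [q00 [q10 [q01 [q20 [q11 [q02 eQ]]]]]] := E2ex hQ.
have [a00 [a10 [a01 [a20 [a11 [a02 eA]]]]]] := E2ex (hP k0).
have [b00 [b10 [b01 [b20 [b11 [b02 eB]]]]]] := E2ex (hP k1).
have H0 := H k0. have H1 := H k1. rewrite /G3_P /= eQ eA in H0. rewrite /G3_P /= eQ eB in H1.
rewrite eQ. clear H eQ eA eB hP hQ.
have EA0 := congr1 (meval (v2 0 0)) H1.
rewrite !evM evP2 evQ !evF6 ?c_one ?c_mone in EA0.
have EA1 := congr1 (meval (v2 0 (16*'i%C))) H1.
rewrite !evM evP2 evQ !evF6 ?c_one ?c_mone in EA1.
have EA2 := congr1 (meval (v2 0 (1*'i%C))) H1.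
rewrite !evM evP2 evQ !evF6 ?c_one ?c_mone in EA2.
have EA3 := congr1 (meval (v2 0 ((-1)*'i%C))) H1.
rewrite !evM evP2 evQ !evF6 ?c_one ?c_mone in EA3.
have EA4 := congr1 (meval (v2 0 (2*'i%C))) H1.
rewrite !evM evP2 evQ !evF6 ?c_one ?c_mone in EA4.
have EA5 := congr1 (meval (v2 0 ((-2)*'i%C))) H1.
rewrite !evM evP2 evQ !evF6 ?c_one ?c_mone in EA5.
have hFA : (1 + 4*s%:C^+2) != 0 :> C.
  by rewrite (_ : (1 + 4*s%:C^+2) = (1 + 4 * s ^+ 2)%:C) ?nzC // !(rmorphD, rmorphM, rmorphXn, rmorphN, rmorph1, rmorph_nat); ring.
have hq00 : (2^+14 * 3^+3 * 5^+1 * 7^+1 * 17^+1) * (1 + 4*s%:C^+2) * q00 = 0.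
  apply: (lin6 ((-((21*1000+398)*1000+580)) + (-((94*1000+847)*1000+760))*s%:C^+2 + (-((37*1000+13)*1000+760))*s%:C^+4) ((-(1*1000+789)) + (-16)*s%:C^+2) (((10*1000+235)*1000+904) + ((40*1000+943)*1000+616)*s%:C^+2) (((11*1000+612)*1000+160) + ((46*1000+448)*1000+640)*s%:C^+2) ((-(587*1000+520)) + (-((2*1000+350)*1000+80))*s%:C^+2) ((-(761*1000+600)) + (-((3*1000+46)*1000+400))*s%:C^+2) EA0 EA1 EA2 EA3 EA4 EA5); ring: hi.
have hq00' := cancel0 hq00 hFA ltac:(Knz).
subst q00.
have hq01 : (2^+18 * 3^+2 * 5^+1 * 7^+1 * 17^+1) * (1 + 4*s%:C^+2) * q01 = 0.
  apply: (lin6 (((-(385*1000+560))*'i%C) + ((-((7*1000+711)*1000+200))*'i%C)*s%:C^+2 + ((-((24*1000+675)*1000+840))*'i%C)*s%:C^+4) (((2*1000+233)*'i%C) + ((1*1000+984)*'i%C)*s%:C^+2 + (768*'i%C)*s%:C^+4) ((((19*1000+740)*1000+672)*'i%C) + (((114*1000+57)*1000+216)*'i%C)*s%:C^+2 + (((140*1000+378)*1000+112)*'i%C)*s%:C^+4) (((-((17*1000+418)*1000+240))*'i%C) + ((-((100*1000+638)*1000+720))*'i%C)*s%:C^+2 + ((-((123*1000+863)*1000+40))*'i%C)*s%:C^+4) (((-((8*1000+910)*1000+720))*'i%C) + ((-((40*1000+343)*1000+40))*'i%C)*s%:C^+2 + ((-((18*1000+800)*1000+640))*'i%C)*s%:C^+4)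 ((((6*1000+930)*1000+560)*'i%C) + (((31*1000+377)*1000+920)*'i%C)*s%:C^+2 + (((14*1000+622)*1000+720)*'i%C)*s%:C^+4) EA0 EA1 EA2 EA3 EA4 EA5); ring: hi.
have hq01' := cancel0 hq01 hFA ltac:(Knz).
subst q01.
have hq02 : (2^+18 * 3^+3 * 7^+1 * 17^+1) * (1 + 4*s%:C^+2) * q02 = 0.
  apply: (lin6 ((-((13*1000+186)*1000+152)) + (-((52*1000+744)*1000+608))*s%:C^+2) (463 + (3*1000+280)*s%:C^+2) (((9*1000+504)*1000+768) + ((38*1000+19)*1000+72)*s%:C^+2) (((8*1000+128)*1000+512) + ((32*1000+514)*1000+48)*s%:C^+2) ((-((2*1000+526)*1000+336)) + (-((10*1000+105)*1000+344))*s%:C^+2) ((-((1*1000+934)*1000+464)) + (-((7*1000+737)*1000+856))*s%:C^+2) EA0 EA1 EA2 EA3 EA4 EA5); ring: hi.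
have hq02' := cancel0 hq02 hFA ltac:(Knz).
subst q02.
clear EA0.
clear EA1.
clear EA2.
clear EA3.
clear EA4.
clear EA5.
have EB0 := congr1 (meval (v2 (2*'i%C) 0)) H1.
rewrite !evM evP2 evQ !evF6 ?c_one ?c_mone in EB0.
have EB1 := congr1 (meval (v2 ((-2)*'i%C) 0)) H1.
rewrite !evM evP2 evQ !evF6 ?c_one ?c_mone in EB1.
have hFB : (1 + 4*s%:C^+2) != 0 :> C.
  by rewrite (_ : (1 + 4*s%:C^+2) = (1 + 4 * s ^+ 2)%:C) ?nzC // !(rmorphD, rmorphM, rmorphXn, rmorphN, rmorph1, rmorph_nat); ring.
have hq10 : ((-1) * 'i%C * 2^+12) * (1 + 4*s%:C^+2) * q10 = 0.
  apply: (lin2 (1 + ((-2)*'i%C)*s%:C) ((-1) + ((-2)*'i%C)*s%:C) EB0 EB1); ring: hi.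
have hq10' := cancel0 hq10 hFB ltac:(Knz).
subst q10.
have hq20 : ((-1) * 'i%C * 2^+13) * (1 + 4*s%:C^+2) * q20 = 0.
  apply: (lin2 (((-1)*'i%C) + (-2)*s%:C) (((-1)*'i%C) + 2*s%:C) EB0 EB1); ring: hi.
have hq20' := cancel0 hq20 hFB ltac:(Knz).
subst q20.
clear EB0.
clear EB1.
have EC0 := congr1 (meval (v2 0 0)) H0.
rewrite !evM evP1 evQ !evF6 ?c_one ?c_mone in EC0.
have EC1 := congr1 (meval (v2 1 0)) H0.
rewrite !evM evP1 evQ !evF6 ?c_one ?c_mone in EC1.
have EC2 := congr1 (meval (v2 (-1) 0)) H0.
rewrite !evM evP1 evQ !evF6 ?c_one ?c_mone in EC2.
have hFC : 1 != 0 :> C.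
  exact: oner_neq0.
have ha00 : ((-1) * 2^+8) * 1 * a00 = 0.
  apply: (lin3 (1) 0 0 EC0 EC1 EC2); ring: hi.
have ha00' := cancel0 ha00 hFC ltac:(Knz).
subst a00.
have ha10 : ((-1) * 2^+7 * 5^+1) * 1 * a10 = 0.
  apply: (lin3 0 (1) ((-1)) EC0 EC1 EC2); ring: hi.
have ha10' := cancel0 ha10 hFC ltac:(Knz).
subst a10.
have ha20 : ((-1) * 2^+8 * 5^+1) * 1 * a20 = 0.
  apply: (lin3 ((-5)) (2) (2) EC0 EC1 EC2); ring: hi.
have ha20' := cancel0 ha20 hFC ltac:(Knz).
subst a20.
clear EC0.
clear EC1.
clear EC2.
have ED0 := congr1 (meval (v2 0 (1*'i%C))) H0.
rewrite !evM evP1 evQ !evF6 ?c_one ?c_mone in ED0.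
have ED1 := congr1 (meval (v2 0 (2*'i%C))) H0.
rewrite !evM evP1 evQ !evF6 ?c_one ?c_mone in ED1.
have hFD : ((17 + 8*s%:C^+2) * (11 + 16*s%:C^+2)) != 0 :> C.
  by apply: mulf_neq0; apply: posF.
have ha01 : ((-1) * 'i%C * 2^+3 * 3^+2) * ((17 + 8*s%:C^+2) * (11 + 16*s%:C^+2)) * a01 = 0.
  apply: (lin2 (88 + 128*s%:C^+2) ((-17) + (-8)*s%:C^+2) ED0 ED1); ring: hi.
have ha01' := cancel0 ha01 hFD ltac:(Knz).
subst a01.
have ha02 : ((-1) * 'i%C * 2^+3 * 3^+2) * ((17 + 8*s%:C^+2) * (11 + 16*s%:C^+2)) * a02 = 0.
  apply: (lin2 ((44*'i%C) + (64*'i%C)*s%:C^+2) (((-17)*'i%C) + ((-8)*'i%C)*s%:C^+2) ED0 ED1); ring: hi.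
have ha02' := cancel0 ha02 hFD ltac:(Knz).
subst a02.
clear ED0.
clear ED1.
rewrite !F6_11 in H0 *.
have H0' : q11%:MP * G3_P1 (1 : R) s = a11%:MP * G3_Q (1 : R) s.
  apply: (mulfI (zw_neq0 R)); transitivity (G3_P1 (1 : R) s * (q11%:MP * (zM R * wM R))); first ring.
  by rewrite H0; ring.
have E1 := congr1 (meval (v2 0 0)) H0'.
rewrite !evM evP1 evQ !evC ?c_one ?c_mone in E1.
have ha11 : 2^+8 * 1 * a11 = 0.
  by apply: (lin1 (-1) E1); ring: hi.
have ha11' := cancel0 ha11 (oner_neq0 _) ltac:(Knz). subst a11.
have E2 := congr1 (meval (v2 1 0)) H0'.
rewrite !evM evP1 evQ !evC ?c_one ?c_mone in E2.
have hq11 : 2^+6 * 5 * q11 = 0.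
  by apply: (lin1 1 E2); ring: hi.
have hq11' := cancel0 hq11 ltac:(Knz) ltac:(Knz). subst q11.
by rewrite mpolyC0 mul0r.
Qed.

Lemma fwd_m (s : R) (hnz : (-1 : R) + 4 * s ^+ 2 != 0) (Q' : MP) (P' : 'I_3 -> MP)
  (H : forall k, G3_P (-1 : R) s k * Q' = P' k * G3_Q (-1 : R) s)
  (hQ : (msize Q' <= 3)%N) (hP : forall k, (msize (P' k) <= 3)%N) : Q' = 0.
Proof.
have hi : 'i%C ^+ 2 = -1 :> C := sqr_i R.
have [q00 [q10 [q01 [q20 [q11 [q02 eQ]]]]]] := E2ex hQ.
have [a00 [a10 [a01 [a20 [a11 [a02 eA]]]]]] := E2ex (hP k0).
have [b00 [b10 [b01 [b20 [b11 [b02 eB]]]]]] := E2ex (hP k1).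
have H0 := H k0. have H1 := H k1. rewrite /G3_P /= eQ eA in H0. rewrite /G3_P /= eQ eB in H1.
rewrite eQ. clear H eQ eA eB hP hQ.
have EA0 := congr1 (meval (v2 0 0)) H1.
rewrite !evM evP2 evQ !evF6 ?c_one ?c_mone in EA0.
have EA1 := congr1 (meval (v2 0 ((-16)*'i%C))) H1.
rewrite !evM evP2 evQ !evF6 ?c_one ?c_mone in EA1.
have EA2 := congr1 (meval (v2 0 (1*'i%C))) H1.
rewrite !evM evP2 evQ !evF6 ?c_one ?c_mone in EA2.
have EA3 := congr1 (meval (v2 0 ((-1)*'i%C))) H1.
rewrite !evM evP2 evQ !evF6 ?c_one ?c_mone in EA3.
have EA4 := congr1 (meval (v2 0 (2*'i%C))) H1.
rewrite !evM evP2 evQ !evF6 ?c_one ?c_mone in EA4.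
have EA5 := congr1 (meval (v2 0 ((-2)*'i%C))) H1.
rewrite !evM evP2 evQ !evF6 ?c_one ?c_mone in EA5.
have hFA : ((-1) + 4*s%:C^+2) != 0 :> C.
  by rewrite (_ : ((-1) + 4*s%:C^+2) = (-1 + 4 * s ^+ 2)%:C) ?nzC // !(rmorphD, rmorphM, rmorphXn, rmorphN, rmorph1, rmorph_nat); ring.
have hq00 : (2^+14 * 3^+3 * 5^+1 * 7^+1 * 17^+1) * ((-1) + 4*s%:C^+2) * q00 = 0.
  apply: (lin6 (((21*1000+398)*1000+580) + (-((94*1000+847)*1000+760))*s%:C^+2 + ((37*1000+13)*1000+760)*s%:C^+4) ((1*1000+789) + (-16)*s%:C^+2) ((-((11*1000+612)*1000+160)) + ((46*1000+448)*1000+640)*s%:C^+2) ((-((10*1000+235)*1000+904)) + ((40*1000+943)*1000+616)*s%:C^+2) ((761*1000+600) + (-((3*1000+46)*1000+400))*s%:C^+2) ((587*1000+520) + (-((2*1000+350)*1000+80))*s%:C^+2) EA0 EA1 EA2 EA3 EA4 EA5); ring: hi.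
have hq00' := cancel0 hq00 hFA ltac:(Knz).
subst q00.
have hq01 : (2^+18 * 3^+2 * 5^+1 * 7^+1 * 17^+1) * ((-1) + 4*s%:C^+2) * q01 = 0.
  apply: (lin6 (((-(385*1000+560))*'i%C) + (((7*1000+711)*1000+200)*'i%C)*s%:C^+2 + ((-((24*1000+675)*1000+840))*'i%C)*s%:C^+4) (((2*1000+233)*'i%C) + ((-(1*1000+984))*'i%C)*s%:C^+2 + (768*'i%C)*s%:C^+4) (((-((17*1000+418)*1000+240))*'i%C) + (((100*1000+638)*1000+720)*'i%C)*s%:C^+2 + ((-((123*1000+863)*1000+40))*'i%C)*s%:C^+4) ((((19*1000+740)*1000+672)*'i%C) + ((-((114*1000+57)*1000+216))*'i%C)*s%:C^+2 + (((140*1000+378)*1000+112)*'i%C)*s%:C^+4) ((((6*1000+930)*1000+560)*'i%C) + ((-((31*1000+377)*1000+920))*'i%C)*s%:C^+2 + (((14*1000+622)*1000+720)*'i%C)*s%:C^+4) (((-((8*1000+910)*1000+720))*'i%C) + (((40*1000+343)*1000+40)*'i%C)*s%:C^+2 + ((-((18*1000+800)*1000+640))*'i%C)*s%:C^+4) EA0 EA1 EA2 EA3 EA4 EA5); ring: hi.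
have hq01' := cancel0 hq01 hFA ltac:(Knz).
subst q01.
have hq02 : (2^+18 * 3^+3 * 7^+1 * 17^+1) * ((-1) + 4*s%:C^+2) * q02 = 0.
  apply: (lin6 (((13*1000+186)*1000+152) + (-((52*1000+744)*1000+608))*s%:C^+2) ((-463) + (3*1000+280)*s%:C^+2) ((-((8*1000+128)*1000+512)) + ((32*1000+514)*1000+48)*s%:C^+2) ((-((9*1000+504)*1000+768)) + ((38*1000+19)*1000+72)*s%:C^+2) (((1*1000+934)*1000+464) + (-((7*1000+737)*1000+856))*s%:C^+2) (((2*1000+526)*1000+336) + (-((10*1000+105)*1000+344))*s%:C^+2) EA0 EA1 EA2 EA3 EA4 EA5); ring: hi.
have hq02' := cancel0 hq02 hFA ltac:(Knz).
subst q02.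
clear EA0.
clear EA1.
clear EA2.
clear EA3.
clear EA4.
clear EA5.
have EB0 := congr1 (meval (v2 2 0)) H1.
rewrite !evM evP2 evQ !evF6 ?c_one ?c_mone in EB0.
have EB1 := congr1 (meval (v2 (-2) 0)) H1.
rewrite !evM evP2 evQ !evF6 ?c_one ?c_mone in EB1.
have hFB : (1 + (-4)*s%:C^+2) != 0 :> C.
  by rewrite (_ : (1 + (-4)*s%:C^+2) = (- (-1 + 4 * s ^+ 2))%:C) ?nzC ?oppr_eq0 // !(rmorphD, rmorphM, rmorphXn, rmorphN, rmorph1, rmorph_nat); ring.
have hq10 : (2^+12) * (1 + (-4)*s%:C^+2) * q10 = 0.
  apply: (lin2 ((-1) + (-2)*s%:C) (1 + (-2)*s%:C) EB0 EB1); ring: hi.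
have hq10' := cancel0 hq10 hFB ltac:(Knz).
subst q10.
have hq20 : (2^+13) * (1 + (-4)*s%:C^+2) * q20 = 0.
  apply: (lin2 ((-1) + (-2)*s%:C) ((-1) + 2*s%:C) EB0 EB1); ring: hi.
have hq20' := cancel0 hq20 hFB ltac:(Knz).
subst q20.
clear EB0.
clear EB1.
have EC0 := congr1 (meval (v2 0 0)) H0.
rewrite !evM evP1 evQ !evF6 ?c_one ?c_mone in EC0.
have EC1 := congr1 (meval (v2 1 0)) H0.
rewrite !evM evP1 evQ !evF6 ?c_one ?c_mone in EC1.
have EC2 := congr1 (meval (v2 (-1) 0)) H0.
rewrite !evM evP1 evQ !evF6 ?c_one ?c_mone in EC2.
have hFC : 1 != 0 :> C.
  exact: oner_neq0.
have ha00 : (2^+8) * 1 * a00 = 0.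
  apply: (lin3 (1) 0 0 EC0 EC1 EC2); ring: hi.
have ha00' := cancel0 ha00 hFC ltac:(Knz).
subst a00.
have ha10 : (2^+7 * 3^+1) * 1 * a10 = 0.
  apply: (lin3 0 (1) ((-1)) EC0 EC1 EC2); ring: hi.
have ha10' := cancel0 ha10 hFC ltac:(Knz).
subst a10.
have ha20 : (2^+8 * 3^+1) * 1 * a20 = 0.
  apply: (lin3 ((-3)) (2) (2) EC0 EC1 EC2); ring: hi.
have ha20' := cancel0 ha20 hFC ltac:(Knz).
subst a20.
clear EC0.
clear EC1.
clear EC2.
have ED0 := congr1 (meval (v2 0 (20*'i%C))) H0.
rewrite !evM evP1 evQ !evF6 ?c_one ?c_mone in ED0.
have ED1 := congr1 (meval (v2 0 (32*'i%C))) H0.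
rewrite !evM evP1 evQ !evF6 ?c_one ?c_mone in ED1.
have hFD : ((11 + 400*s%:C^+2) * (7 + 64*s%:C^+2)) != 0 :> C.
  by apply: mulf_neq0; apply: posF.
have ha01 : ((-1) * 'i%C * 2^+13 * 3^+3 * 5^+1) * ((11 + 400*s%:C^+2) * (7 + 64*s%:C^+2)) * a01 = 0.
  apply: (lin2 ((7*1000+168) + (65*1000+536)*s%:C^+2) ((-275) + (-(10*1000+0))*s%:C^+2) ED0 ED1); ring: hi.
have ha01' := cancel0 ha01 hFD ltac:(Knz).
subst a01.
have ha02 : ((-1) * 'i%C * 2^+15 * 3^+3 * 5^+1) * ((11 + 400*s%:C^+2) * (7 + 64*s%:C^+2)) * a02 = 0.
  apply: (lin2 ((896*'i%C) + ((8*1000+192)*'i%C)*s%:C^+2) (((-55)*'i%C) + ((-(2*1000+0))*'i%C)*s%:C^+2) ED0 ED1); ring: hi.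
have ha02' := cancel0 ha02 hFD ltac:(Knz).
subst a02.
clear ED0.
clear ED1.
rewrite !F6_11 in H0 *.
have H0' : q11%:MP * G3_P1 (-1 : R) s = a11%:MP * G3_Q (-1 : R) s.
  apply: (mulfI (zw_neq0 R)); transitivity (G3_P1 (-1 : R) s * (q11%:MP * (zM R * wM R))); first ring.
  by rewrite H0; ring.
have E1 := congr1 (meval (v2 0 0)) H0'.
rewrite !evM evP1 evQ !evC ?c_one ?c_mone in E1.
have ha11 : 2^+8 * 1 * a11 = 0.
  by apply: (lin1 (1) E1); ring: hi.
have ha11' := cancel0 ha11 (oner_neq0 _) ltac:(Knz). subst a11.
have E2 := congr1 (meval (v2 1 0)) H0'.
rewrite !evM evP1 evQ !evC ?c_one ?c_mone in E2.
have hq11 : (-1) * 2^+6 * 3 * q11 = 0.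
  by apply: (lin1 1 E2); ring: hi.
have hq11' := cancel0 hq11 ltac:(Knz) ltac:(Knz). subst q11.
by rewrite mpolyC0 mul0r.
Qed.
End Fwd.

Lemma lin4 {F : comRingType} (y1 y2 y3 y4 l1 r1 l2 r2 l3 r3 l4 r4 c x : F) :
  l1 = r1 -> l2 = r2 -> l3 = r3 -> l4 = r4 ->
  y1 * (l1 - r1) + y2 * (l2 - r2) + y3 * (l3 - r3) + y4 * (l4 - r4) = c * x -> c * x = 0.
Proof. by move=> -> -> -> -> <-; rewrite !subrr !mulr0 !addr0. Qed.
Arguments lin4 {F} y1 y2 y3 y4 {l1 r1 l2 r2 l3 r3 l4 r4 c x}.

Section Bwd.
Variable R : rcfType.
Local Notation C := R[i].
Local Notation MP := {mpoly C[2]}.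
Local Notation z := (zM R).
Local Notation w := (wM R).
Local Notation I := (iM R).

Definition Lf : MP := 8 * z + I * w - 16.
Definition P1f : MP := 8 * z ^+ 2 - 5 * I * z * w + 2 * w ^+ 2 + 16 * z.
Definition P2f : MP := 16 * z ^+ 2 + w ^+ 2.
Definition P3f : MP := 8 * z * w + 3 * I * w ^+ 2 + 16 * w.
Definition Qf : MP := 16 + 8 * z + 3 * I * w - 4 * I * z * w + w ^+ 2.
Definition Pf (k : 'I_3) : MP := match val k with 0 => P1f | 1 => P2f | _ => P3f end.

Lemma iM2 : I ^+ 2 = -1.
Proof. by rewrite /iM -rmorphXn sqr_i rmorphN1. Qed.
Lemma cR_def (x : R) : cR x = ((x%:C)%:MP : MP). Proof. by []. Qed.
Lemma cRm1 : cR (-1 : R) = -1 :> MP.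
Proof. by rewrite cR_def c_mone rmorphN1. Qed.
Lemma cRh : 2 * cR (2^-1 : R) = 1 :> MP.
Proof.
rewrite cR_def -(rmorph_nat (@mpolyC 2 C) 2) -rmorphM -(rmorph_nat (real_complex R) 2) -rmorphM.
by rewrite mulfV ?pnatr_eq0 // !rmorph1.
Qed.

Lemma factP1 : G3_P1 (-1) (2^-1) = Lf * P1f.
Proof.
rewrite /G3_P1 cRm1; have hI := iM2; have hH := cRh; move: (cR _) hH => H hH.
apply/eqP; rewrite -subr_eq0; apply/eqP.
transitivity ((2 * H - 1) * ((-32)*w^+2 + (2*I)*w^+3 + 12*z*w^+2 + 24*z*w^+2*H + ((-32)*I)*z^+2*w)).
  by rewrite /Lf /P1f; ring: hI.
by rewrite hH subrr mul0r.
Qed.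
Lemma factP2 : G3_P2 (-1) (2^-1) = Lf * P2f.
Proof.
rewrite /G3_P2 cRm1; have hI := iM2; have hH := cRh; move: (cR _) hH => H hH.
apply/eqP; rewrite -subr_eq0; apply/eqP.
transitivity ((2 * H - 1) * (8*z*w^+2 + 128*z^+3)).
  by rewrite /Lf /P2f; ring: hI.
by rewrite hH subrr mul0r.
Qed.
Lemma factP3 : G3_P3 (-1) (2^-1) = Lf * P3f.
Proof.
rewrite /G3_P3 cRm1; have hI := iM2; have hH := cRh; move: (cR _) hH => H hH.
apply/eqP; rewrite -subr_eq0; apply/eqP.
transitivity ((2 * H - 1) * ((-4)*w^+3 + (-8)*w^+3*H + (32*I)*z*w^+2)).
  by rewrite /Lf /P3f; ring: hI.
by rewrite hH subrr mul0r.
Qed.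
Lemma factQ : G3_Q (-1) (2^-1) = Lf * Qf.
Proof.
rewrite /G3_Q cRm1; have hI := iM2; have hH := cRh; move: (cR _) hH => H hH.
apply/eqP; rewrite -subr_eq0; apply/eqP.
transitivity ((2 * H - 1) * ((-36)*w^+2 + (-72)*w^+2*H + (96*I)*z*w + 12*z*w^+2)).
  by rewrite /Lf /Qf; ring: hI.
by rewrite hH subrr mul0r.
Qed.

Lemma evnz (p : MP) a b : p.@[v2 a b] != 0 -> p != 0.
Proof. by apply: contra => /eqP ->; rewrite ev0. Qed.

Lemma evLf a b : Lf.@[v2 a b] = 8 * a + 'i%C * b - 16.
Proof. by rewrite /Lf; evsimp. Qed.
Lemma evP2f a b : P2f.@[v2 a b] = 16 * a ^+ 2 + b ^+ 2.
Proof. by rewrite /P2f; evsimp. Qed.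
Lemma evP3f a b : P3f.@[v2 a b] = 8 * a * b + 3 * 'i%C * b ^+ 2 + 16 * b.
Proof. by rewrite /P3f; evsimp. Qed.
Lemma evQf a b : Qf.@[v2 a b] = 16 + 8 * a + 3 * 'i%C * b - 4 * 'i%C * a * b + b ^+ 2.
Proof. by rewrite /Qf; evsimp. Qed.

Lemma Qf_neq0 : Qf != 0.
Proof. apply: (@evnz _ 0 0); rewrite evQf (_ : _ + _ = 2^+4); first Knz. ring. Qed.
Lemma Lf_neq0 : Lf != 0.
Proof. apply: (@evnz _ 0 0); rewrite evLf (_ : _ - _ = (-1) * 2^+4); first Knz. ring. Qed.
Lemma P2f_neq0 : P2f != 0.
Proof. apply: (@evnz _ 1 0); rewrite evP2f (_ : _ + _ = 2^+4); first Knz. ring. Qed.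

Lemma P1f_F6 : P1f = F6 0 16 0 8 (-5 * 'i%C) 2.
Proof. by rewrite /P1f /F6 /iM; ring. Qed.
Lemma P2f_F6 : P2f = F6 0 0 0 16 0 1.
Proof. by rewrite /P2f /F6; ring. Qed.
Lemma P3f_F6 : P3f = F6 0 0 16 0 8 (3 * 'i%C).
Proof. by rewrite /P3f /F6 /iM; ring. Qed.
Lemma Qf_F6 : Qf = F6 16 8 (3 * 'i%C) 0 (-4 * 'i%C) 1.
Proof. by rewrite /Qf /F6 /iM; ring. Qed.
End Bwd.

Lemma pred_le3 (n : nat) : (n <= 3)%N -> (n.-1 <= 2)%N.
Proof. by case: n => [|[|[|[|n]]]]. Qed.
Lemma le3_pred (n : nat) : (n.-1 <= 2)%N -> (n <= 3)%N.
Proof. by case: n => [|[|[|[|n]]]]. Qed.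

Section Bwd2.
Variable R : rcfType.
Local Notation C := R[i].
Local Notation MP := {mpoly C[2]}.

Lemma P3f_neq0 : P3f R != 0.
Proof.
have hi := sqr_i R.
apply: (@evnz _ _ 0 'i%C); rewrite evP3f (_ : _ + _ = 13 * 'i%C); first Knz. ring: hi.
Qed.

Lemma Qf_size : msize (Qf R) = 3%N.
Proof.
apply/eqP; rewrite eqn_leq {1}Qf_F6 F6size /=.
rewrite ltnNge; apply/negP => h.
have [c00 [c10 [c01 e1]]] := E1ex h.
have hi := sqr_i R.
have E00 := congr1 (meval (v2 0 0)) e1.
have E10 := congr1 (meval (v2 1 0)) e1.
have E01 := congr1 (meval (v2 0 1)) e1.
have E11 := congr1 (meval (v2 1 1)) e1.
rewrite evQf evF6 in E00. rewrite evQf evF6 in E10.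
rewrite evQf evF6 in E01. rewrite evQf evF6 in E11.
have H : ((-1) * 2^+2 * 'i%C) * 1 = 0 :> C.
  by apply: (lin4 1 (-1) (-1) 1 E00 E10 E01 E11); ring: hi.
move: H; rewrite mulr1 => /eqP; apply/negP; Knz.
Qed.

Lemma reducedf : reduced (@Pf R) (Qf R).
Proof.
move=> [D [hD [[A hA] hP]]].
have hi := sqr_i R.
have [A2 hA2] := hP k1. rewrite /Pf /= in hA2.
have [A3 hA3] := hP k2. rewrite /Pf /= in hA3.
have hD0 : D != 0.
  by apply/eqP => h; move: (Qf_neq0 R); rewrite hA h mul0r eqxx.
have hA0 : A != 0.
  by apply/eqP => h; move: (Qf_neq0 R); rewrite hA h mulr0 eqxx.
have hDs : (msize D <= 3)%N.
  have := msizeM hD0 hA0; rewrite -hA Qf_size => h3.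
  have : (0 < msize A)%N by rewrite lt0n msize_poly_eq0.
  move: h3; case: (msize A) => [//|a] h3 _; by rewrite h3 addnS /= leq_addr.
case: (leqP (msize D) 2) => hD2.
- have [d00 [d10 [d01 eD]]] := E1ex hD2.
  have EQ00 := congr1 (meval (v2 0 0)) hA.
  rewrite evQf evM eD evF6 in EQ00.
  have hd00 : d00 != 0.
    apply/eqP => h0; rewrite h0 in EQ00.
    have H : 2^+4 * 1 * 1 = 0 :> C by apply: (lin1 1 EQ00); ring.
    move: H; rewrite !mulr1 => /eqP; apply/negP; Knz.
  case: (eqVneq d10 0) => hd10.
  + case: (eqVneq d01 0) => hd01.
    * move: hD; rewrite eD hd10 hd01 /F6 !mpolyC0 !mul0r !addr0.
      by rewrite msizeC; case: (_ != 0).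
    * pose w0 := - d00 / d01.
      have hw : d01 * w0 = - d00 by rewrite mulrC /w0 !mulNr divfK.
      have E := congr1 (meval (v2 0 w0)) hA2.
      rewrite evP2f evM eD evF6 hd10 hw in E.
      have H : 1 * w0 ^+ 2 = 0 by apply: (lin1 1 E); ring.
      move: H; rewrite mul1r => /eqP; rewrite expf_eq0 /= => /eqP hw0.
      by move: hw; rewrite hw0 mulr0 => /eqP; rewrite eq_sym oppr_eq0 (negbTE hd00).
  + pose z0 := - d00 / d10.
    have hz : d10 * z0 = - d00 by rewrite mulrC /z0 !mulNr divfK.
    have E := congr1 (meval (v2 z0 0)) hA2.
    rewrite evP2f evM eD evF6 hz in E.
    have H : 16 * z0 ^+ 2 = 0 by apply: (lin1 1 E); ring.
    move: H => /eqP; rewrite mulf_eq0 pnatr_eq0 /= expf_eq0 /= => /eqP hz0.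
    by move: hz; rewrite hz0 mulr0 => /eqP; rewrite eq_sym oppr_eq0 (negbTE hd00).
- have hD3 : msize D = 3%N by apply/eqP; rewrite eqn_leq hDs hD2.
  have hA20 : A2 != 0.
    by apply/eqP => h; move: (P2f_neq0 R); rewrite hA2 h mulr0 eqxx.
  have hA30 : A3 != 0.
    by apply/eqP => h; move: (P3f_neq0); rewrite hA3 h mulr0 eqxx.
  have hs2 : (msize A2 <= 1)%N.
    have := msizeM hD0 hA20; rewrite -hA2 hD3.
    have : (msize (P2f R) <= 3)%N by rewrite P2f_F6 F6size.
    move=> h1 h2; move: h1; rewrite h2; case: (msize A2) => [|[|a]] //.
  have hs3 : (msize A3 <= 1)%N.
    have := msizeM hD0 hA30; rewrite -hA3 hD3.
    have : (msize (P3f R) <= 3)%N by rewrite P3f_F6 F6size.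
    move=> h1 h2; move: h1; rewrite h2; case: (msize A3) => [|[|a]] //.
  move: hA2 hA3; rewrite (msize1_polyC hs2) (msize1_polyC hs3) => hA2 hA3.
  have E1 := congr1 (meval (v2 1 0)) hA2.
  have E2 := congr1 (meval (v2 1 0)) hA3.
  rewrite evP2f evM evC in E1. rewrite evP3f evM evC in E2.
  have hu : D.@[v2 1 0] != 0.
    apply/eqP => hu0; rewrite hu0 mul0r in E1.
    have H : 2^+4 * 1 * 1 = 0 :> C by apply: (lin1 1 E1); ring.
    move: H; rewrite !mulr1 => /eqP; apply/negP; Knz.
  have hc3 : A3@_0 = 0.
    have H : D.@[v2 1 0] * A3@_0 = 0 by rewrite -E2; ring.
    by move/eqP: H; rewrite mulf_eq0 (negbTE hu) /= => /eqP.
  by move: (P3f_neq0); rewrite hA3 hc3 mpolyC0 mulr0 eqxx.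
Qed.

Lemma bwd_main : rat_map_degree_is (G3_P (-1 : R) (2^-1)) (G3_Q (-1 : R) (2^-1)) 2.
Proof.
split; first by rewrite factQ mulf_neq0 ?Lf_neq0 ?Qf_neq0.
exists (@Pf R), (Qf R); split.
- exact: Qf_neq0.
- exact: reducedf.
- move=> k; rewrite /G3_P /Pf; case: k => [[|[|k]] hk] /=;
    rewrite ?factP1 ?factP2 ?factP3 factQ; ring.
- rewrite /rep_degree /mtdeg Qf_size /=.
  apply/maxn_idPr; apply/bigmax_leqP => k _; rewrite /mtdeg; apply: pred_le3.
  rewrite /Pf; case: k => [[|[|k]] hk] /=.
  + by rewrite P1f_F6 F6size.
  + by rewrite P2f_F6 F6size.
  + by rewrite P3f_F6 F6size.
Qed.
End Bwd2.

Theorem lemma4p2 (R : rcfType) (e s : R) :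
  (e = 1 \/ e = -1) -> 0 <= s ->
  (rat_map_degree_is (G3_P e s) (G3_Q e s) 2 <-> (e = -1 /\ s = 2^-1)).
Proof.
move=> he hs; split; last first.
  by case=> -> ->; exact: bwd_main.
case=> _ [P' [Q' [hQ'0 _ hPQ hdeg]]].
have hQ : (msize Q' <= 3)%N.
  apply: le3_pred; have : (mtdeg Q' <= rep_degree P' Q')%N by exact: leq_maxr.
  by rewrite hdeg.
have hP k : (msize (P' k) <= 3)%N.
  apply: le3_pred; have : (mtdeg (P' k) <= rep_degree P' Q')%N.
    by apply: leq_trans (leq_maxl _ _); exact: (leq_bigmax k).
  by rewrite hdeg.
case: (eqVneq (e + 4 * s ^+ 2) 0) => hnz; last first.
  case: he => he; subst e.
  - by move: (@fwd_p R s hnz Q' P' hPQ hQ hP) => h; rewrite h eqxx in hQ'0.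
  - by move: (@fwd_m R s hnz Q' P' hPQ hQ hP) => h; rewrite h eqxx in hQ'0.
have h2 : 0 <= s ^+ 2 := sqr_ge0 s.
case: he => he; subst e.
  exfalso; move: hnz => /eqP; apply/negP; apply: lt0r_neq0.
  by apply: ltr_wpDr; [rewrite mulr_ge0 ?ler0n ?sqr_ge0 | exact: ltr01].
split=> //.
have h : (2 * s - 1) * (2 * s + 1) = 0 by rewrite -hnz; ring.
move/eqP: h; rewrite mulf_eq0 => /orP[/eqP h1|/eqP h1].
  apply: (@mulfI _ 2); first by rewrite pnatr_eq0.
  by rewrite mulfV ?pnatr_eq0 //; apply/eqP; rewrite -subr_eq0 h1.
exfalso; move: h1 => /eqP; apply/negP; apply: lt0r_neq0.
by apply: ltr_wpDl; [rewrite mulr_ge0 ?ler0n | exact: ltr01].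
Qed.
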